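(* Let $f\in L^1(\mathbb{R})$ be an even real-valued function and let $\mathcal{W}$ be a $C^1$ weak solution of $\mathcal{W}''(t)+(-1+f(t))\mathcal{W}(t)=0$ on $\mathbb{R}$ such that $\mathcal{W}(t)>0$ for all $t\ge0$ and $\lim_{t\to\infty}\mathcal{W}(t)=0$. Then no nontrivial solution of $\mathcal{Y}''+(-1+f)\mathcal{Y}=0$ vanishes at two distinct values of $t$ if and only if $\mathcal{W}'(0)\le0$.
   Context: A $C^1$ weak solution of $\mathcal{Y}''+k\mathcal{Y}=0$ with $k\in L^1_{loc}$ is a $C^1$ function $\mathcal{Y}$ with $\mathcal{Y}'$ absolutely continuous and $\mathcal{Y}''+k\mathcal{Y}=0$ almost everywhere. *)

(* Defs.v *)
From Stdlib Require Import Reals List.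
Open Scope R_scope.

Definition null_set (N : R -> Prop) : Prop :=
  forall eps, 0 < eps ->
    exists a b : nat -> R,
      (forall n, a n <= b n) /\
      (forall x, N x -> exists n, a n < x < b n) /\
      (forall m, sum_f_R0 (fun n => b n - a n) m <= eps).

Definition ae (P : R -> Prop) : Prop :=
  exists N, null_set N /\ forall x, ~ N x -> P x.

Definition brick (a b x : R) : R :=
  if Rle_dec a x then (if Rlt_dec x b then 1 else 0) else 0.

(* Lebesgue integrability on R (Mikusinski's definition via series of
   brick functions): f ~ sum c_n 1_[a_n,b_n) with sum |c_n|(b_n - a_n) < oo,
   and f(x) equals the series at every x where it converges absolutely. *)
Definition L1 (f : R -> R) : Prop :=
  exists c a b : nat -> R,
    (forall n, a n < b n) /\
    (exists M, forall m, sum_f_R0 (fun n => Rabs (c n) * (b n - a n)) m <= M) /\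
    (forall x,
       (exists M, forall m,
          sum_f_R0 (fun n => Rabs (c n) * brick (a n) (b n) x) m <= M) ->
       Un_cv (fun m => sum_f_R0 (fun n => c n * brick (a n) (b n) x) m) (f x)).

Fixpoint incr_intervals (lo : R) (l : list (R * R)) (hi : R) : Prop :=
  match l with
  | nil => lo <= hi
  | (x, y) :: t => lo <= x /\ x <= y /\ incr_intervals y t hi
  end.

Definition total_length (l : list (R * R)) : R :=
  fold_right (fun p s => (snd p - fst p) + s) 0 l.

Definition total_variation (g : R -> R) (l : list (R * R)) : R :=
  fold_right (fun p s => Rabs (g (snd p) - g (fst p)) + s) 0 l.

Definition abs_cont_on (g : R -> R) (a b : R) : Prop :=
  forall eps, 0 < eps -> exists delta, 0 < delta /\
    forall l, incr_intervals a l b -> total_length l < delta ->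
      total_variation g l < eps.

Definition loc_abs_cont (g : R -> R) : Prop :=
  forall a b, a <= b -> abs_cont_on g a b.

Definition C1_weak_solution (k : R -> R) (Y : R -> R) : Prop :=
  exists Y' : R -> R,
    (forall t, derivable_pt_lim Y t (Y' t)) /\
    continuity Y' /\
    loc_abs_cont Y' /\
    ae (fun t => derivable_pt_lim Y' t (- (k t * Y t))).

(* Main.v *)
Require Import Defs.
From Stdlib Require Import Reals List Lra Lia Classical.
Open Scope R_scope.

Lemma incr_weak_lo lo lo' l hi : lo' <= lo -> incr_intervals lo l hi -> incr_intervals lo' l hi.
Proof. destruct l as [|[x y] t]; simpl; intros; [lra| intuition lra]. Qed.

Lemma incr_weak_hi lo l hi hi' : hi <= hi' -> incr_intervals lo l hi -> incr_intervals lo l hi'.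
Proof.
  revert lo; induction l as [|[x y] t IH]; simpl; intros lo H1 H2; [lra|].
  destruct H2 as [? [? ?]]; split; [|split]; auto.
Qed.

Lemma incr_app lo l1 mid l2 hi : incr_intervals lo l1 mid -> incr_intervals mid l2 hi ->
  incr_intervals lo (l1 ++ l2) hi.
Proof.
  revert lo; induction l1 as [|[x y] t IH]; simpl; intros lo H1 H2.
  - eapply incr_weak_lo; eauto.
  - destruct H1 as [? [? ?]]; split; [|split]; auto.
Qed.

Lemma incr_lo_hi lo l hi : incr_intervals lo l hi -> lo <= hi.
Proof.
  revert lo; induction l as [|[x y] t IH]; simpl; intros lo H; [lra|].
  destruct H as [? [? H]]; apply IH in H; lra.
Qed.

Lemma TL_app l1 l2 : total_length (l1 ++ l2) = total_length l1 + total_length l2.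
Proof. induction l1 as [|[x y] t IH]; simpl; [ring| rewrite IH; ring]. Qed.

Lemma TV_app g l1 l2 : total_variation g (l1 ++ l2) = total_variation g l1 + total_variation g l2.
Proof. induction l1 as [|[x y] t IH]; simpl; [ring| rewrite IH; ring]. Qed.

Lemma TV_ge0 g l : 0 <= total_variation g l.
Proof. induction l as [|[x y] t IH]; simpl; [lra|]. pose proof (Rabs_pos (g y - g x)); lra. Qed.

Lemma TV_dom g h1 h2 C1 C2 C3 a b :
  (forall u v, a <= u -> u <= v -> v <= b ->
     Rabs (g v - g u) <= C1 * Rabs (h1 v - h1 u) + C2 * Rabs (h2 v - h2 u) + C3 * (v - u)) ->
  forall l lo, a <= lo -> incr_intervals lo l b ->
  total_variation g l <= C1 * total_variation h1 l + C2 * total_variation h2 l + C3 * total_length l.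
Proof.
  intros H l; induction l as [|[x y] t IH]; simpl; intros lo Hlo Hi; [lra|].
  destruct Hi as [? [? Hi]].
  pose proof (incr_lo_hi _ _ _ Hi).
  specialize (IH y ltac:(lra) Hi). specialize (H x y ltac:(lra) ltac:(lra) ltac:(lra)). lra.
Qed.

Lemma ac_dom g h1 h2 C1 C2 C3 a b :
  0 <= C1 -> 0 <= C2 -> 0 <= C3 ->
  abs_cont_on h1 a b -> abs_cont_on h2 a b ->
  (forall u v, a <= u -> u <= v -> v <= b ->
     Rabs (g v - g u) <= C1 * Rabs (h1 v - h1 u) + C2 * Rabs (h2 v - h2 u) + C3 * (v - u)) ->
  abs_cont_on g a b.
Proof.
  intros P1 P2 P3 A1 A2 H eps Heps.
  destruct (A1 (eps / (3 * (C1 + 1)))) as [d1 [Hd1 D1]].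
  { apply Rdiv_lt_0_compat; lra. }
  destruct (A2 (eps / (3 * (C2 + 1)))) as [d2 [Hd2 D2]].
  { apply Rdiv_lt_0_compat; lra. }
  exists (Rmin d1 (Rmin d2 (eps / (3 * (C3 + 1))))).
  split.
  { apply Rmin_pos; auto. apply Rmin_pos; auto. apply Rdiv_lt_0_compat; lra. }
  intros l Hl Hlen.
  pose proof (Rmin_l d1 (Rmin d2 (eps / (3 * (C3 + 1))))).
  pose proof (Rmin_r d1 (Rmin d2 (eps / (3 * (C3 + 1))))).
  pose proof (Rmin_l d2 (eps / (3 * (C3 + 1)))).
  pose proof (Rmin_r d2 (eps / (3 * (C3 + 1)))).
  specialize (D1 l Hl ltac:(lra)). specialize (D2 l Hl ltac:(lra)).
  pose proof (TV_dom g h1 h2 C1 C2 C3 a b H l a (Rle_refl a) Hl).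
  pose proof (TV_ge0 h1 l). pose proof (TV_ge0 h2 l).
  assert (E1 : C1 * total_variation h1 l <= eps / 3).
  { apply Rle_trans with ((C1 + 1) * total_variation h1 l). nra.
    apply Rle_trans with ((C1 + 1) * (eps / (3 * (C1 + 1)))). apply Rmult_le_compat_l; lra.
    right; field; lra. }
  assert (E2 : C2 * total_variation h2 l <= eps / 3).
  { apply Rle_trans with ((C2 + 1) * total_variation h2 l). nra.
    apply Rle_trans with ((C2 + 1) * (eps / (3 * (C2 + 1)))). apply Rmult_le_compat_l; lra.
    right; field; lra. }
  assert (TL0 : 0 <= total_length l).
  { clear -Hl. revert Hl. generalize a. induction l as [|[x y] t IH]; simpl; intros lo Hl; [lra|].
    destruct Hl as [? [? Hl]]. specialize (IH _ Hl). lra. }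
  assert (E3 : C3 * total_length l < eps / 3 \/ C3 * total_length l <= 0).
  { destruct (Req_dec C3 0) as [->|NZ]. right; lra. left.
    apply Rle_lt_trans with ((C3 + 1) * total_length l). nra.
    apply Rlt_le_trans with ((C3 + 1) * (eps / (3 * (C3 + 1)))). apply Rmult_lt_compat_l; lra.
    right; field; lra. }
  lra.
Qed.

Definition lenI (a b x : R) := Rmax 0 (Rmin b x - a).
Definition SL (an bn : nat -> R) x K := sum_f_R0 (fun n => lenI (an n) (bn n) x) K.

Lemma lenI_ge0 a b x : 0 <= lenI a b x.
Proof. unfold lenI; apply Rmax_l. Qed.

Lemma lenI_le a b x : a <= b -> lenI a b x <= b - a.
Proof. intros; unfold lenI. apply Rmax_lub; [lra|]. pose proof (Rmin_l b x); lra. Qed.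

Lemma lenI_mono a b x y : x <= y -> lenI a b x <= lenI a b y.
Proof.
  intros; unfold lenI. apply Rmax_lub; [apply Rmax_l|].
  eapply Rle_trans; [|apply Rmax_r].
  unfold Rmin; destruct (Rle_dec b x), (Rle_dec b y); lra.
Qed.

Lemma lenI_in a b x y : a < x -> x <= y -> y < b -> lenI a b y - lenI a b x = y - x.
Proof.
  intros; unfold lenI. rewrite !Rmin_right by lra.
  rewrite !Rmax_right by lra. ring.
Qed.

Lemma SL_ge0 an bn x K : 0 <= SL an bn x K.
Proof. unfold SL; induction K; simpl; [apply lenI_ge0|]. pose proof (lenI_ge0 (an (S K)) (bn (S K)) x); lra. Qed.

Lemma SL_monoK an bn x K K' : (K <= K')%nat -> SL an bn x K <= SL an bn x K'.
Proof.
  induction 1; [lra|]. unfold SL in *; simpl. pose proof (lenI_ge0 (an (S m)) (bn (S m)) x); lra.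
Qed.

Lemma SL_monox an bn x y K : x <= y -> SL an bn x K <= SL an bn y K.
Proof.
  intros; unfold SL; induction K; simpl; [apply lenI_mono; auto|].
  pose proof (lenI_mono (an (S K)) (bn (S K)) x y H); lra.
Qed.

Lemma SL_le an bn x K : (forall n, an n <= bn n) ->
  SL an bn x K <= sum_f_R0 (fun n => bn n - an n) K.
Proof.
  intros H; unfold SL; induction K; simpl; [apply lenI_le; auto|].
  pose proof (lenI_le (an (S K)) (bn (S K)) x (H _)); lra.
Qed.

Lemma SL_add an bn x y K m : (m <= K)%nat -> x <= y ->
  SL an bn x K + (lenI (an m) (bn m) y - lenI (an m) (bn m) x) <= SL an bn y K.
Proof.
  intros Hm Hxy; unfold SL; induction K; simpl.
  - assert (m = 0%nat) by lia. subst. lra.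
  - destruct (Nat.eq_dec m (S K)) as [->|NE].
    + pose proof (SL_monox an bn x y K Hxy). unfold SL in H; lra.
    + specialize (IHK ltac:(lia)). pose proof (lenI_mono (an (S K)) (bn (S K)) x y Hxy). lra.
Qed.

Section Main.
Variables (g : R -> R) (N : R -> Prop) (a b eps : R) (an bn : nat -> R).
Hypothesis Hab : a <= b.
Hypothesis Heps : 0 < eps.
Hypothesis Hcov : forall x, N x -> exists n, an n < x < bn n.
Hypothesis Hder : forall x, ~ N x -> derivable_pt_lim g x 0.

Definition PP x := exists l K, incr_intervals a l x /\ total_length l <= SL an bn x K /\
   Rabs (g x - g a) <= eps * (x - a) + total_variation g l.

Lemma gauge s : exists d, 0 < d /\ forall x y, s - d < x -> x <= s -> s <= y -> y < s + d ->
   PP x -> PP y.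
Proof.
  destruct (classic (N s)) as [Ns | nNs].
  - destruct (Hcov s Ns) as [m Hm].
    exists (Rmin (s - an m) (bn m - s)). split. apply Rmin_pos; lra.
    intros x y H1 H2 H3 H4 [l [K [Hi [HL HV]]]].
    pose proof (Rmin_l (s - an m) (bn m - s)). pose proof (Rmin_r (s - an m) (bn m - s)).
    exists (l ++ (x, y) :: nil), (Nat.max K m). split; [|split].
    + eapply incr_app; eauto. simpl. lra.
    + rewrite TL_app. simpl.
      pose proof (SL_add an bn x y (Nat.max K m) m ltac:(lia) ltac:(lra)).
      pose proof (lenI_in (an m) (bn m) x y ltac:(lra) ltac:(lra) ltac:(lra)).
      pose proof (SL_monoK an bn x K (Nat.max K m) ltac:(lia)). lra.
    + rewrite TV_app; simpl.
      pose proof (Rabs_triang (g y - g x) (g x - g a)).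
      replace (g y - g x + (g x - g a)) with (g y - g a) in H5 by ring.
      assert (eps * (x - a) <= eps * (y - a)) by (apply Rmult_le_compat_l; lra). lra.
  - specialize (Hder s nNs eps Heps). destruct Hder as [d Hd].
    exists d. split; [apply (cond_pos d)|].
    assert (K : forall h, Rabs h < d -> Rabs (g (s + h) - g s) <= eps * Rabs h).
    { intros h Hh. destruct (Req_dec h 0) as [->|NZ].
      - rewrite Rplus_0_r. replace (g s - g s) with 0 by ring. rewrite Rabs_R0; lra.
      - specialize (Hd h NZ Hh). rewrite Rminus_0_r in Hd.
        unfold Rdiv in Hd. rewrite Rabs_mult, Rabs_inv in Hd.
        pose proof (Rabs_pos_lt h NZ).
        apply Rmult_lt_compat_r with (r := Rabs h) in Hd; auto.
        rewrite Rmult_assoc, Rinv_l in Hd by lra. lra. }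
    intros x y H1 H2 H3 H4 [l [K' [Hi [HL HV]]]].
    exists l, K'. split; [|split].
    + eapply incr_weak_hi; [|eauto]; lra.
    + pose proof (SL_monox an bn x y K' ltac:(lra)); lra.
    + pose proof (K (y - s) ltac:(rewrite Rabs_right; lra)) as Ky.
      pose proof (K (x - s) ltac:(rewrite Rabs_left1; lra)) as Kx.
      replace (s + (y - s)) with y in Ky by ring.
      replace (s + (x - s)) with x in Kx by ring.
      rewrite (Rabs_right (y - s)) in Ky by lra. rewrite (Rabs_left1 (x - s)) in Kx by lra.
      pose proof (Rabs_triang (g y - g s) (g s - g a)) as T1.
      pose proof (Rabs_triang (g s - g x) (g x - g a)) as T2.
      replace (g y - g s + (g s - g a)) with (g y - g a) in T1 by ring.
      replace (g s - g x + (g x - g a)) with (g s - g a) in T2 by ring.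
      rewrite <- Rabs_Ropp in Kx. replace (- (g x - g s)) with (g s - g x) in Kx by ring.
      lra.
Qed.

Lemma PP_b : PP b.
Proof.
  set (E := fun x => a <= x <= b /\ PP x).
  assert (PPa : PP a).
  { exists nil, 0%nat. simpl. split; [lra|split]. apply SL_ge0.
    rewrite Rminus_diag, Rabs_R0. lra. }
  destruct (completeness E) as [s [Hub Hl]].
  { exists b. intros x [? ?]; lra. }
  { exists a. split; [lra|auto]. }
  assert (Has : a <= s) by (apply Hub; split; [lra|auto]).
  assert (Hsb : s <= b) by (apply Hl; intros x [? ?]; lra).
  destruct (gauge s) as [d [Hd G]].
  assert (Ex : exists x, E x /\ s - d < x).
  { apply NNPP; intro C. assert (s <= s - d); [|lra].
    apply Hl. intros x Ex. apply Rnot_lt_le. intro. apply C. exists x; auto. }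
  destruct Ex as [x [[Hx Px] Hxs]].
  assert (x <= s) by (apply Hub; split; auto).
  destruct (Req_dec s b) as [<-|NE].
  - apply (G x s); auto; lra.
  - set (y := Rmin b (s + d / 2)).
    assert (s < y) by (unfold y; apply Rmin_glb_lt; lra).
    assert (y <= b) by apply Rmin_l.
    assert (y <= s + d/2) by apply Rmin_r.
    assert (E y) by (split; [lra| apply (G x y); auto; lra]).
    specialize (Hub y H3). lra.
Qed.
End Main.

Lemma ac_zero_deriv g a b (N : R -> Prop) : a <= b -> abs_cont_on g a b -> null_set N ->
  (forall x, ~ N x -> derivable_pt_lim g x 0) -> g b = g a.
Proof.
  intros Hab Hac HN Hder.
  apply NNPP; intro NE.
  set (D := Rabs (g b - g a)).
  assert (HD : 0 < D) by (apply Rabs_pos_lt; intro; apply NE; lra).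
  destruct (Hac (D/2) ltac:(lra)) as [d [Hd Hdd]].
  destruct (HN (d/2) ltac:(lra)) as [an [bn [Hle [Hcov Hsum]]]].
  set (eps := D / (4 * (b - a + 1))).
  assert (Heps : 0 < eps) by (unfold eps; apply Rdiv_lt_0_compat; lra).
  destruct (PP_b g N a b eps an bn Hab Heps Hcov Hder) as [l [K [Hi [HL HV]]]].
  pose proof (SL_le an bn b K Hle). specialize (Hsum K).
  specialize (Hdd l Hi ltac:(lra)).
  assert (eps * (b - a) <= D / 4).
  { apply Rle_trans with (eps * (b - a + 1)). apply Rmult_le_compat_l; lra.
    right; unfold eps; field; lra. }
  fold D in HV. lra.
Qed.

Definition tinter (x y : nat -> R) (n : nat) : R :=
  if Nat.even n then x (Nat.div2 n) else y (Nat.div2 n).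

Lemma tinter_even x y k : tinter x y (2 * k) = x k.
Proof. unfold tinter. rewrite Nat.even_mul, Nat.div2_double. reflexivity. Qed.

Lemma tinter_odd x y k : tinter x y (S (2 * k)) = y k.
Proof. unfold tinter. rewrite Nat.even_succ, Nat.odd_mul, Nat.div2_succ_double. reflexivity. Qed.

Lemma sum_tinter x y k : sum_f_R0 (tinter x y) (S (2 * k)) = sum_f_R0 x k + sum_f_R0 y k.
Proof.
  induction k.
  - simpl. unfold tinter. simpl. reflexivity.
  - replace (S (2 * S k)) with (S (S (S (2 * k)))) by lia.
    change (sum_f_R0 (tinter x y) (S (S (S (2 * k))))) with
      (sum_f_R0 (tinter x y) (S (2 * k)) + tinter x y (S (S (2 * k))) + tinter x y (S (S (S (2 * k))))).
    rewrite IHk.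
    replace (S (S (2 * k))) with (2 * S k)%nat by lia.
    rewrite tinter_even, tinter_odd. simpl. ring.
Qed.

Lemma sum_mono_nonneg (t : nat -> R) m m' : (forall n, 0 <= t n) -> (m <= m')%nat ->
  sum_f_R0 t m <= sum_f_R0 t m'.
Proof. intros H; induction 1; [lra|]. simpl. specialize (H (S m0)). lra. Qed.

Lemma null_union (N1 N2 : R -> Prop) : null_set N1 -> null_set N2 ->
  null_set (fun x => N1 x \/ N2 x).
Proof.
  intros H1 H2 eps He.
  destruct (H1 (eps/2) ltac:(lra)) as [a1 [b1 [L1 [C1 S1]]]].
  destruct (H2 (eps/2) ltac:(lra)) as [a2 [b2 [L2 [C2 S2]]]].
  exists (tinter a1 a2), (tinter b1 b2). split; [|split].
  - intro n. unfold tinter. destruct (Nat.even n); auto.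
  - intros x [Hx|Hx].
    + destruct (C1 x Hx) as [n Hn]. exists (2 * n)%nat. rewrite !tinter_even. auto.
    + destruct (C2 x Hx) as [n Hn]. exists (S (2 * n)). rewrite !tinter_odd. auto.
  - intro m.
    assert (E : forall n, b1 n - a1 n = b1 n - a1 n) by reflexivity.
    apply Rle_trans with (sum_f_R0 (fun n => tinter b1 b2 n - tinter a1 a2 n) (S (2 * m))).
    { apply sum_mono_nonneg; [|lia]. intro n. unfold tinter. destruct (Nat.even n);
      [specialize (L1 (Nat.div2 n))|specialize (L2 (Nat.div2 n))]; lra. }
    rewrite (sum_eq _ (tinter (fun n => b1 n - a1 n) (fun n => b2 n - a2 n))).
    2:{ intros i _. unfold tinter. destruct (Nat.even i); reflexivity. }
    rewrite sum_tinter. specialize (S1 m). specialize (S2 m). lra.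
Qed.

Lemma null_refl (N : R -> Prop) : null_set N -> null_set (fun x => N (- x)).
Proof.
  intros H eps He. destruct (H eps He) as [a [b [L [C S]]]].
  exists (fun n => - b n), (fun n => - a n). split; [|split].
  - intro n; specialize (L n); lra.
  - intros x Hx. destruct (C _ Hx) as [n Hn]. exists n; lra.
  - intro m. rewrite (sum_eq _ (fun n => b n - a n)); auto. intros; ring.
Qed.

Definition refl (l : list (R * R)) := rev (map (fun p => (- snd p, - fst p)) l).

Lemma refl_incr lo l hi : incr_intervals lo l hi -> incr_intervals (- hi) (refl l) (- lo).
Proof.
  revert lo; induction l as [|[x y] t IH]; simpl; intros lo H; [lra|].
  destruct H as [? [? H]]. specialize (IH _ H).
  eapply incr_app; [exact IH|]. simpl. lra.
Qed.

Lemma refl_TL l : total_length (refl l) = total_length l.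
Proof.
  induction l as [|[x y] t IH]; simpl; [auto|]. unfold refl in *. simpl.
  rewrite TL_app, IH. simpl. ring.
Qed.

Lemma refl_TV g l : total_variation g (refl l) = total_variation (fun t => - g (- t)) l.
Proof.
  induction l as [|[x y] t IH]; simpl; [auto|]. unfold refl in *. simpl.
  rewrite TV_app, IH. simpl.
  replace (- g (- y) - - g (- x)) with (g (- x) - g (- y)) by ring.
  ring.
Qed.

Lemma lac_refl g : loc_abs_cont g -> loc_abs_cont (fun t => - g (- t)).
Proof.
  intros H a b Hab eps He. destruct (H (- b) (- a) ltac:(lra) eps He) as [d [Hd D]].
  exists d; split; auto. intros l Hl Hlen.
  rewrite <- refl_TV. apply D. apply refl_incr; auto. rewrite refl_TL; auto.
Qed.

Lemma lac_plus g h : loc_abs_cont g -> loc_abs_cont h -> loc_abs_cont (fun t => g t + h t).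
Proof.
  intros Hg Hh a b Hab. apply (ac_dom _ g h 1 1 0); try lra; auto.
  intros u v _ _ _. replace (g v + h v - (g u + h u)) with ((g v - g u) + (h v - h u)) by ring.
  pose proof (Rabs_triang (g v - g u) (h v - h u)). lra.
Qed.

Lemma bnd f a b : a <= b -> (forall x, continuity_pt f x) ->
  exists M, 0 <= M /\ forall x, a <= x <= b -> Rabs (f x) <= M.
Proof.
  intros Hab Hc.
  destruct (continuity_ab_maj (fun x => Rabs (f x)) a b Hab) as [Mx [HM _]].
  { intros c _. apply (continuity_pt_comp f Rabs); auto. apply Rcontinuity_abs. }
  exists (Rabs (f Mx)); split; [apply Rabs_pos|]; auto.
Qed.

Lemma lip Y Y' a b M : (forall t, derivable_pt_lim Y t (Y' t)) ->
  (forall x, a <= x <= b -> Rabs (Y' x) <= M) ->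
  forall u v, a <= u -> u <= v -> v <= b -> Rabs (Y v - Y u) <= M * (v - u).
Proof.
  intros HY HM u v Hu Huv Hv. destruct (Req_dec u v) as [->|NE].
  - replace (Y v - Y v) with 0 by ring. rewrite Rabs_R0. lra.
  - destruct (MVT_cor2 Y Y' u v ltac:(lra) (fun c _ => HY c)) as [c [Hc Hc2]].
    rewrite Hc, Rabs_mult, (Rabs_right (v - u)) by lra.
    apply Rmult_le_compat_r; [lra|]. apply HM; lra.
Qed.

Lemma dcont Y Y' : (forall t, derivable_pt_lim Y t (Y' t)) -> forall x, continuity_pt Y x.
Proof. intros H x. apply derivable_continuous_pt. exists (Y' x). apply H. Qed.

Lemma mle x y M : Rabs x <= M -> Rabs (x * y) <= M * Rabs y.
Proof. intros; rewrite Rabs_mult. apply Rmult_le_compat_r; auto. apply Rabs_pos. Qed.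

Lemma dlim_eq f x l l' : derivable_pt_lim f x l -> l = l' -> derivable_pt_lim f x l'.
Proof. intros H <-; auto. Qed.

Section Wr.
Variables (k F G F' G' : R -> R) (NF NG : R -> Prop).
Hypothesis dF : forall t, derivable_pt_lim F t (F' t).
Hypothesis dG : forall t, derivable_pt_lim G t (G' t).
Hypothesis cF : continuity F'.
Hypothesis cG : continuity G'.
Hypothesis aF : loc_abs_cont F'.
Hypothesis aG : loc_abs_cont G'.
Hypothesis nF : null_set NF.
Hypothesis nG : null_set NG.
Hypothesis eF : forall t, ~ NF t -> derivable_pt_lim F' t (- (k t * F t)).
Hypothesis eG : forall t, ~ NG t -> derivable_pt_lim G' t (- (k t * G t)).

Definition wr t := F t * G' t - F' t * G t.

Lemma wr_ac a b : a <= b -> abs_cont_on wr a b.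
Proof.
  intros Hab.
  destruct (bnd F a b Hab (dcont F F' dF)) as [M1 [P1 B1]].
  destruct (bnd G a b Hab (dcont G G' dG)) as [M2 [P2 B2]].
  destruct (bnd F' a b Hab cF) as [M3 [P3 B3]].
  destruct (bnd G' a b Hab cG) as [M4 [P4 B4]].
  set (M := M1 + M2 + M3 + M4).
  assert (H1 : forall x, a <= x <= b -> Rabs (F x) <= M) by (intros x Hx; specialize (B1 x Hx); unfold M; lra).
  assert (H2 : forall x, a <= x <= b -> Rabs (G x) <= M) by (intros x Hx; specialize (B2 x Hx); unfold M; lra).
  assert (H3 : forall x, a <= x <= b -> Rabs (F' x) <= M) by (intros x Hx; specialize (B3 x Hx); unfold M; lra).
  assert (H4 : forall x, a <= x <= b -> Rabs (G' x) <= M) by (intros x Hx; specialize (B4 x Hx); unfold M; lra).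
  assert (PM : 0 <= M) by (unfold M; lra).
  apply (ac_dom wr G' F' M M (2 * (M * M))); try lra; auto.
  { pose proof (Rmult_le_pos M M PM PM); lra. }
  intros u v Hu Huv Hv.
  pose proof (lip F F' a b M dF H3 u v Hu Huv Hv) as LF.
  pose proof (lip G G' a b M dG H4 u v Hu Huv Hv) as LG.
  unfold wr.
  replace (F v * G' v - F' v * G v - (F u * G' u - F' u * G u)) with
    (F v * (G' v - G' u) + G' u * (F v - F u) + (- G v) * (F' v - F' u) + (- F' u) * (G v - G u)) by ring.
  pose proof (mle (F v) (G' v - G' u) M (H1 v ltac:(lra))).
  pose proof (mle (G' u) (F v - F u) M (H4 u ltac:(lra))).
  pose proof (mle (- G v) (F' v - F' u) M ltac:(rewrite Rabs_Ropp; apply H2; lra)).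
  pose proof (mle (- F' u) (G v - G u) M ltac:(rewrite Rabs_Ropp; apply H3; lra)).
  pose proof (Rmult_le_compat_l M _ _ PM LF). pose proof (Rmult_le_compat_l M _ _ PM LG).
  pose proof (Rabs_triang (F v * (G' v - G' u) + G' u * (F v - F u) + - G v * (F' v - F' u)) (- F' u * (G v - G u))).
  pose proof (Rabs_triang (F v * (G' v - G' u) + G' u * (F v - F u)) (- G v * (F' v - F' u))).
  pose proof (Rabs_triang (F v * (G' v - G' u)) (G' u * (F v - F u))).
  assert (M * (M * (v - u)) = M * M * (v - u)) by ring.
  lra.
Qed.

Lemma wr_deriv t : ~ NF t -> ~ NG t -> derivable_pt_lim wr t 0.
Proof.
  intros h1 h2.
  apply (dlim_eq _ _ _ _ (derivable_pt_lim_minus (F * G')%F (F' * G)%F t _ _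
     (derivable_pt_lim_mult F G' t _ _ (dF t) (eG t h2))
     (derivable_pt_lim_mult F' G t _ _ (eF t h1) (dG t)))).
  ring.
Qed.

Lemma wr_const s t : wr s = wr t.
Proof.
  assert (forall a b, a <= b -> wr b = wr a).
  { intros a b Hab. apply (ac_zero_deriv wr a b (fun x => NF x \/ NG x)); auto.
    - apply wr_ac; auto.
    - apply null_union; auto.
    - intros x Hx. apply wr_deriv; tauto. }
  destruct (Rle_dec s t); [symmetry|]; apply H; lra.
Qed.
End Wr.

Lemma dlim_refl f x l : derivable_pt_lim f (- x) l -> derivable_pt_lim (fun t => f (- t)) x (- l).
Proof.
  intros H eps He. destruct (H eps He) as [d Hd]. exists d. intros h hn hd.
  assert (hn' : - h <> 0) by (intro; apply hn; lra).
  specialize (Hd (- h) hn' ltac:(rewrite Rabs_Ropp; auto)).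
  replace (- (x + h)) with (- x + - h) by ring.
  replace ((f (- x + - h) - f (- x)) / h - - l) with (- ((f (- x + - h) - f (- x)) / - h - l))
    by (field; auto).
  rewrite Rabs_Ropp; auto.
Qed.

Lemma cont_refl g : continuity g -> continuity (fun t => - g (- t)).
Proof.
  intros Hg. pose proof (continuity_opp _ (continuity_comp (- id)%F g
     (continuity_opp id (derivable_continuous _ derivable_id)) Hg)) as H.
  exact H.
Qed.

Lemma mvt2 h D a b : (forall x, derivable_pt_lim h x (D x)) -> exists xi, h b - h a = D xi * (b - a).
Proof.
  intros H. destruct (Rtotal_order a b) as [Hl|[->|Hg]].
  - destruct (MVT_cor2 h D a b Hl (fun c _ => H c)) as [c [Hc _]]. eauto.
  - exists b. ring.
  - destruct (MVT_cor2 h D b a Hg (fun c _ => H c)) as [c [Hc _]]. exists c.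
    replace (h b - h a) with (- (h a - h b)) by ring. rewrite Hc. ring.
Qed.

Theorem proposition3p18 (f W : R -> R) :
  L1 f ->
  (forall t, f (- t) = f t) ->
  C1_weak_solution (fun t => -1 + f t) W ->
  (forall t, 0 <= t -> 0 < W t) ->
  (forall eps, 0 < eps -> exists T, forall t, T <= t -> Rabs (W t) < eps) ->
  ((forall Y : R -> R,
      C1_weak_solution (fun t => -1 + f t) Y ->
      (exists t, Y t <> 0) ->
      ~ (exists t1 t2, t1 <> t2 /\ Y t1 = 0 /\ Y t2 = 0))
   <->
   (forall d, derivable_pt_lim W 0 d -> d <= 0)).
Proof.
  intros _ Hev Wsol Wpos0 Wlim.
  set (k := fun t => -1 + f t).
  destruct Wsol as [W' [dW [cW [aW [NW [nW eW]]]]]].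
  set (V := fun t => W (- t)). set (V' := fun t => - W' (- t)).
  assert (dV : forall t, derivable_pt_lim V t (V' t)).
  { intro t. unfold V, V'. apply dlim_refl. apply dW. }
  assert (cV : continuity V') by (apply cont_refl; auto).
  assert (aV : loc_abs_cont V') by (apply lac_refl; auto).
  assert (nV : null_set (fun x => NW (- x))) by (apply null_refl; auto).
  assert (eV : forall t, ~ NW (- t) -> derivable_pt_lim V' t (- (k t * V t))).
  { intros t Ht. specialize (eW (- t) Ht).
    apply dlim_refl in eW. apply derivable_pt_lim_opp in eW.
    apply (dlim_eq _ _ _ _ eW). unfold k, V. rewrite Hev. ring. }
  assert (eW' : forall t, ~ NW t -> derivable_pt_lim W' t (- (k t * W t))) by exact eW.
  set (c := - 2 * W 0 * W' 0).
  assert (Wc : forall t, W t * V' t - W' t * V t = c).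
  { intro t. pose proof (wr_const k W V W' V' NW (fun x => NW (- x)) dW dV cW cV aW aV nW nV eW' eV t 0) as E.
    unfold wr in E. rewrite E. unfold c, V, V'. rewrite Ropp_0. ring. }
  set (q := fun t => V t / W t).
  set (q' := fun t => c / (W t)²).
  assert (dq : forall t, W t <> 0 -> derivable_pt_lim q t (q' t)).
  { intros t Ht. apply (dlim_eq _ _ _ _ (derivable_pt_lim_div V W t _ _ (dV t) (dW t) Ht)).
    unfold q'. rewrite <- (Wc t). unfold Rdiv; ring. }
  assert (q0 : q 0 = 1).
  { unfold q, V. rewrite Ropp_0. field. pose proof (Wpos0 0 (Rle_refl 0)); lra. }
  assert (mvtq : forall a b, 0 <= a -> a < b -> exists xi, a < xi < b /\ q b - q a = q' xi * (b - a)).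
  { intros a b Ha Hab. destruct (MVT_cor2 q q' a b Hab) as [xi [H1 H2]].
    - intros x Hx. apply dq. pose proof (Wpos0 x ltac:(lra)); lra.
    - exists xi; auto. }
  assert (W0 : 0 < W 0) by (apply Wpos0; lra).
  split.
  -
    intros H d Hd. rewrite (uniqueness_limite W 0 d (W' 0) Hd (dW 0)).
    apply Rnot_lt_le. intro Hpos.
    assert (Hc : c < 0) by (unfold c; nra).
    destruct (Wlim 1 ltac:(lra)) as [T HT].
    set (T0 := Rmax T 0). set (h := 2 / (- c)).
    assert (Hh : 0 < h) by (unfold h; apply Rdiv_lt_0_compat; lra).
    assert (qT0 : q T0 <= 1).
    { destruct (Req_dec T0 0) as [E|NE].
      - rewrite E; lra.
      - assert (0 < T0) by (pose proof (Rmax_r T 0); fold T0 in H0; lra).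
        destruct (mvtq 0 T0 ltac:(lra) H0) as [xi [Hxi Hq]].
        assert (0 < (W xi)²) by (apply Rsqr_pos_lt; pose proof (Wpos0 xi ltac:(lra)); lra).
        assert (q' xi <= 0).
        { unfold q', Rdiv. pose proof (Rinv_0_lt_compat _ H1). nra. }
        nra. }
    assert (qT1 : q (T0 + h) <= -1).
    { destruct (mvtq T0 (T0 + h) ltac:(unfold T0; apply Rmax_r) ltac:(lra)) as [xi [Hxi Hq]].
      assert (T <= xi) by (pose proof (Rmax_l T 0); fold T0 in H0; lra).
      assert (0 <= xi) by (pose proof (Rmax_r T 0); fold T0 in H1; lra).
      pose proof (HT xi H0) as Hb. pose proof (Wpos0 xi H1) as Hp.
      rewrite Rabs_right in Hb by lra.
      assert (Hs : 0 < (W xi)² < 1) by (unfold Rsqr; split; nra).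
      assert (q' xi <= c).
      { unfold q'. apply Rmult_le_reg_r with ((W xi)²); [lra|].
        unfold Rdiv. rewrite Rmult_assoc, Rinv_l by lra. nra. }
      replace (T0 + h - T0) with h in Hq by ring.
      assert (c * h = -2) by (unfold h; field; lra).
      nra. }
    set (T1 := T0 + h) in *.
    assert (T1pos : 0 < T1) by (pose proof (Rmax_r T 0); fold T0 in H0; unfold T1; lra).
    set (Y := fun t => W t + V t).
    assert (YT1 : Y T1 <= 0).
    { pose proof (Wpos0 T1 ltac:(lra)). unfold q in qT1. unfold Y.
      apply Rmult_le_compat_r with (r := W T1) in qT1; [|lra].
      unfold Rdiv in qT1. rewrite Rmult_assoc, Rinv_l in qT1 by lra. lra. }
    assert (Y0 : Y 0 = 2 * W 0) by (unfold Y, V; rewrite Ropp_0; ring).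
    assert (cY : continuity Y).
    { apply (continuity_plus W V). intro x; apply (dcont W W' dW).
      intro x; apply (dcont V V' dV). }
    destruct (IVT_cor Y 0 T1 cY ltac:(lra) ltac:(rewrite Y0; nra)) as [z [Hz Yz]].
    assert (zpos : 0 < z) by (destruct (Req_dec z 0) as [->|]; [rewrite Y0 in Yz; lra| lra]).
    apply (H Y).
    + exists (fun t => W' t + V' t). split; [|split; [|split]].
      * intro t. apply (derivable_pt_lim_plus W V t _ _ (dW t) (dV t)).
      * apply (continuity_plus W' V'); auto.
      * apply lac_plus; auto.
      * exists (fun x => NW x \/ NW (- x)). split; [apply null_union; auto|].
        intros x Hx. apply (dlim_eq _ _ _ _ (derivable_pt_lim_plus W' V' x _ _
           (eW' x ltac:(tauto)) (eV x ltac:(tauto)))).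
        unfold Y, k. ring.
    + exists 0. rewrite Y0. lra.
    + exists z, (- z). split; [lra|split; auto].
      rewrite <- Yz. unfold Y, V. rewrite Ropp_involutive. ring.
  -
    intros Hd.
    assert (Hc : 0 <= c) by (unfold c; pose proof (Hd _ (dW 0)); nra).
    assert (Wpos : forall t, 0 < W t).
    { intro t. destruct (Rle_dec 0 t) as [Ht|Ht]; [auto|].
      destruct (mvtq 0 (- t) ltac:(lra) ltac:(lra)) as [xi [Hxi Hq]].
      assert (0 < (W xi)²) by (apply Rsqr_pos_lt; pose proof (Wpos0 xi ltac:(lra)); lra).
      assert (0 <= q' xi) by (unfold q', Rdiv; pose proof (Rinv_0_lt_compat _ H); nra).
      assert (1 <= q (- t)) by nra.
      pose proof (Wpos0 (- t) ltac:(lra)).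
      unfold q, V in H1. rewrite Ropp_involutive in H1.
      apply Rmult_le_compat_r with (r := W (- t)) in H1; [|lra].
      unfold Rdiv in H1. rewrite Rmult_assoc, Rinv_l in H1 by lra. lra. }
    intros Y [Y' [dY [cY [aY [NY [nY eY]]]]]] [t0 Ht0] [t1 [t2 [Hne [Y1 Y2]]]].
    set (cw := W 0 * Y' 0 - W' 0 * Y 0).
    assert (Wc2 : forall t, W t * Y' t - W' t * Y t = cw).
    { intro t. exact (wr_const k W Y W' Y' NW NY dW dY cW cY aW aY nW nY eW' eY t 0). }
    set (r := fun t => Y t / W t).
    set (r' := fun t => cw / (W t)²).
    assert (dr : forall t, derivable_pt_lim r t (r' t)).
    { intros t. assert (W t <> 0) by (pose proof (Wpos t); lra).
      apply (dlim_eq _ _ _ _ (derivable_pt_lim_div Y W t _ _ (dY t) (dW t) H)).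
      unfold r'. rewrite <- (Wc2 t). unfold Rdiv; ring. }
    destruct (mvt2 r r' t1 t2 dr) as [xi Hxi].
    assert (r t1 = 0) by (unfold r; rewrite Y1; unfold Rdiv; ring).
    assert (r t2 = 0) by (unfold r; rewrite Y2; unfold Rdiv; ring).
    assert (cw = 0).
    { assert (Hr : r' xi = 0).
      { rewrite H, H0 in Hxi. symmetry in Hxi. replace (0 - 0) with 0 in Hxi by ring.
        apply Rmult_integral in Hxi. destruct Hxi; [auto|lra]. }
      unfold r', Rdiv in Hr. apply Rmult_integral in Hr.
      destruct Hr as [Hr|Hr]; auto. exfalso.
      pose proof (Wpos xi). assert (Hs : 0 < (W xi)²) by (apply Rsqr_pos_lt; lra).
      pose proof (Rinv_0_lt_compat _ Hs). lra. }
    destruct (mvt2 r r' t1 t0 dr) as [xi2 Hxi2].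
    unfold r' in Hxi2. rewrite H1 in Hxi2. rewrite H in Hxi2.
    assert (r t0 = 0) by (unfold Rdiv in Hxi2; lra).
    unfold r in H2. pose proof (Wpos t0).
    apply Ht0. apply Rmult_eq_compat_r with (r := W t0) in H2.
    unfold Rdiv in H2. rewrite Rmult_assoc, Rinv_l in H2 by lra. lra.
Qed.
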